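(* Let $n\ge 2$, $V_n=[n]$, and let $K_n=(V_n,E_n)$ be the complete graph. Let $1\le k\le\lfloor n/2\rfloor$. Then there exists a family $T_k$ of $k$-element subsets of $V_n$ with \[|T_k|\le (1+k\ln(n))\,2^{-k}\binom{n}{k}\] such that for every matching $M\subset E_n$ with $|M|=k$ there exists $X\in T_k$ with $\delta(X)\cap M=M$, i.e. $M\subset E(X,V_n\setminus X)$ (every edge of $M$ has exactly one endpoint in $X$).
   Context: For $X\subset V_n$, $\delta(X)$ denotes the set of edges with exactly one endpoint in $X$, and $E(X,V_n\setminus X)$ the set of edges joining $X$ to its complement. A matching is a set of pairwise disjoint edges. *)

(* Defs.v *)
From mathcomp Require Import all_boot.
From Stdlib Require Import Reals.
Set Implicit Arguments. Unset Strict Implicit. Unset Printing Implicit Defensive.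

Definition is_edge (n : nat) (e : {set 'I_n}) : bool := #|e| == 2.

Definition is_matching (n : nat) (M : {set {set 'I_n}}) : bool :=
  [forall e in M, is_edge e] &&
  [forall e in M, forall f in M, (e != f) ==> [disjoint e & f]].

Definition delta (n : nat) (X : {set 'I_n}) : {set {set 'I_n}} :=
  [set e : {set 'I_n} | is_edge e && (#|e :&: X| == 1)].

(* Main.v *)
Require Import Defs.
From Stdlib Require Import Reals Lra.
Local Open Scope R_scope.

Lemma exp_pow_nat (x : R) (m : nat) : exp x ^ m = exp (INR m * x).
Proof.
induction m as [|m IH].
- simpl; rewrite Rmult_0_l, exp_0; reflexivity.
- change (exp x ^ S m) with (exp x * exp x ^ m).
  rewrite IH, <- exp_plus; f_equal; rewrite S_INR; ring.
Qed.

Definition pchoice (L : R) (m : nat) : R :=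
  if Rle_dec L (INR m) then L / INR m else 1.

Lemma pchoice_range L m : 0 <= L -> (1 <= m)%nat -> 0 <= pchoice L m <= 1.
Proof.
intros HL Hm; assert (Hr : 1 <= INR m) by (apply (le_INR 1); exact Hm).
unfold pchoice; destruct (Rle_dec L (INR m)) as [h|h]; [|lra].
split.
- apply Rmult_le_pos; [lra|]; apply Rlt_le, Rinv_0_lt_compat; lra.
- apply (Rmult_le_reg_r (INR m)); [lra|]. unfold Rdiv.
  rewrite Rmult_assoc, Rinv_l by lra; lra.
Qed.

Lemma final_ineq (C N L t : R) (m : nat) :
  0 <= L -> (1 <= m)%nat -> 0 <= C -> 0 <= N -> N * INR m <= C * exp L ->
  t <= pchoice L m * C + N * (1 - pchoice L m) ^ m ->
  t <= (1 + L) * / INR m * C.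
Proof.
intros HL Hm HC HN HNr Ht.
assert (Hr : 1 <= INR m) by (apply (le_INR 1); exact Hm).
assert (Hir : 0 < / INR m) by (apply Rinv_0_lt_compat; lra).
assert (Hrr : INR m * / INR m = 1) by (apply Rinv_r; lra).
unfold pchoice in Ht; destruct (Rle_dec L (INR m)) as [h|h].
- set (p := L / INR m) in *.
  assert (Hp : p * INR m = L) by (unfold p, Rdiv; rewrite Rmult_assoc, Rinv_l by lra; ring).
  assert (Hp0 : 0 <= p) by (unfold p; apply Rmult_le_pos; lra).
  assert (Hp1 : p <= 1) by (apply (Rmult_le_reg_r (INR m)); lra).
  assert (H1 : (1 - p) ^ m <= exp (- L)).
  { apply Rle_trans with (exp (- p) ^ m).
    - apply pow_incr; split; [lra|]. generalize (exp_ineq1_le (- p)); lra.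
    - rewrite exp_pow_nat; right; f_equal; lra. }
  assert (H2 : N * exp (- L) <= C * / INR m).
  { assert (E : exp L * exp (- L) = 1) by (rewrite <- exp_plus, Rplus_opp_r; apply exp_0).
    assert (Hel : 0 < exp (- L)) by apply exp_pos.
    apply (Rmult_le_reg_r (INR m)); [lra|].
    replace (N * exp (- L) * INR m) with ((N * INR m) * exp (- L)) by ring.
    replace (C * / INR m * INR m) with (C * exp L * exp (- L)).
    2:{ rewrite Rmult_assoc, E, Rmult_assoc, Rinv_l by lra. ring. }
    apply Rmult_le_compat_r; lra. }
  assert (H3 : N * (1 - p) ^ m <= N * exp (- L)) by (apply Rmult_le_compat_l; lra).
  assert (H4 : p * C = L * / INR m * C) by (unfold p, Rdiv; ring).
  nra.
- replace ((1 - 1) ^ m) with 0 in Ht.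
  2:{ destruct m; [inversion Hm|]. simpl. ring. }
  assert (C <= (1 + L) * / INR m * C); [|lra].
  replace C with (INR m * / INR m * C) at 1 by (rewrite Hrr; ring).
  apply Rmult_le_compat_r; [lra|]. apply Rmult_le_compat_r; lra.
Qed.
Local Close Scope R_scope.
From mathcomp Require Import all_boot.
Set Implicit Arguments. Unset Strict Implicit. Unset Printing Implicit Defensive.

Lemma matchingP n (M : {set {set 'I_n}}) : is_matching M ->
  (forall e, e \in M -> #|e| = 2) /\
  (forall e f x, e \in M -> f \in M -> x \in e -> x \in f -> e = f).
Proof.
case/andP=> /forall_inP H1 /forall_inP H2; split.
  by move=> e /H1 /eqP.
move=> e f x eM fM xe xf; apply/eqP; apply/negPn/negP => nef.
have := H2 e eM; move/forall_inP/(_ f fM)/implyP/(_ nef)/pred0P/(_ x).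
by rewrite /= xe xf.
Qed.

Definition partner n (M : {set {set 'I_n}}) (x : 'I_n) : 'I_n :=
  odflt x [pick y | ([set x; y] \in M) && (y != x)].

Lemma partnerP n (M : {set {set 'I_n}}) x :
  partner M x != x -> [set x; partner M x] \in M.
Proof.
rewrite /partner; case: pickP => [y /andP[]|] //=.
by rewrite eqxx.
Qed.

Lemma rebuild n (X : {set 'I_n}) M : is_matching M -> delta X :&: M = M ->
  M = [set [set x; partner M x] | x in [set x in X | partner M x != x]].
Proof.
move=> HM HD; have [H2 Hd] := matchingP HM.
apply/setP => e; apply/idP/idP.
- move=> eM.
  have : e \in delta X :&: M by rewrite HD.
  rewrite inE in_set => /andP[/andP[_ /cards1P[x Hx]] _].
  have xe : x \in e by have := set11 x; rewrite -Hx inE => /andP[].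
  have xX : x \in X by have := set11 x; rewrite -Hx inE => /andP[].
  have /eqP/cards2P[a [b [ab Eab]]] := H2 e eM.
  have [y [yx Ey]] : exists y, y != x /\ e = [set x; y].
    move: xe; rewrite Eab !inE => /orP[]/eqP->.
      by exists b; split; rewrite // eq_sym.
    by exists a; split => //; apply/setP => z; rewrite !inE orbC.
  have px : partner M x != x.
    rewrite /partner; case: pickP => [z /andP[_ ->]//|/(_ y)].
    by rewrite -Ey eM yx.
  have pM := partnerP px.
  have -> : e = [set x; partner M x].
    by apply: (Hd _ _ x) => //; rewrite !inE eqxx.
  by apply/imsetP; exists x => //; rewrite inE xX px.
- case/imsetP => x; rewrite inE => /andP[_ px] ->.
  exact: partnerP.
Qed.

Lemma count_fix n (X : {set 'I_n}) :
  #|[set M : {set {set 'I_n}} | is_matching M && (delta X :&: M == M)]| <= n ^ #|X|.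
Proof.
pose enc (M : {set {set 'I_n}}) : {ffun {x : 'I_n | x \in X} -> 'I_n} :=
  [ffun x => partner M (val x)].
have -> : n ^ #|X| = #|{ffun {x : 'I_n | x \in X} -> 'I_n}|.
  by rewrite card_ffun card_sig card_ord; congr (_ ^ _); apply: eq_card => x; rewrite !inE.
apply: (@leq_card_in _ _ enc) => M1 M2; rewrite !inE => /andP[m1 /eqP d1] /andP[m2 /eqP d2] E.
rewrite (rebuild m1 d1) (rebuild m2 d2).
have P x : x \in X -> partner M1 x = partner M2 x.
  move=> xX; have := congr1 (fun f : {ffun {x : 'I_n | x \in X} -> 'I_n} => f (exist _ x xX)) E.
  by rewrite /enc !ffunE.
have -> : [set x in X | partner M1 x != x] = [set x in X | partner M2 x != x].
  by apply/setP => x; rewrite !inE; case xX: (x \in X); rewrite // P.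
apply: eq_in_imset => x; rewrite inE => /andP[xX _]; by rewrite P.
Qed.

Definition cov n k (M : {set {set 'I_n}}) : {set {set 'I_n}} :=
  [set X : {set 'I_n} | (#|X| == k) && (delta X :&: M == M)].

Lemma two_elems n (d : 'I_n) (e : {set 'I_n}) : #|e| = 2 ->
  (forall b : bool, nth d (enum e) b \in e) /\
  (forall b b' : bool, nth d (enum e) b = nth d (enum e) b' -> b = b').
Proof.
move=> H; split.
  have sz : size (enum e) = 2 by rewrite -cardE H.
  move=> b; rewrite -mem_enum; apply: mem_nth; rewrite sz; by case: b.
move=> b b' E.
have sz : size (enum e) = 2 by rewrite -cardE H.
have := @nth_uniq _ d (enum e) b b'; rewrite sz E eqxx enum_uniq.
move: E; by case: b; case: b' => // _ /(_ isT isT isT).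

Qed.

Lemma count_trans n (d : 'I_n) k (M : {set {set 'I_n}}) :
  is_matching M -> #|M| = k -> 2 ^ k <= #|cov k M|.
Proof.
move=> HM HK; have [H2 Hd] := matchingP HM.
pose ME := {e : {set 'I_n} | e \in M}.
pose sel (e : ME) (b : bool) := nth d (enum (val e)) b.
have selP (e : ME) b : sel e b \in val e.
  by have [+ _] := two_elems d (H2 _ (valP e)); apply.
have selI (e : ME) b b' : sel e b = sel e b' -> b = b'.
  by have [_ +] := two_elems d (H2 _ (valP e)); apply.
pose tr (g : {ffun ME -> bool}) : {set 'I_n} := [set sel e (g e) | e : ME].
have trP g e (eM : e \in M) x : (x \in e :&: tr g) = (x == sel (exist _ e eM) (g (exist _ e eM))).
  rewrite inE; apply/andP/eqP.
  - case=> xe /imsetP[e' _ Ex]; subst x.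
    have ee : val e' = e by exact: (Hd _ _ (sel e' (g e')) (valP e') eM (selP _ _) xe).
    have -> : e' = exist _ e eM by apply: val_inj.
    by [].
  - move=> ->; split; first exact: (selP (exist _ e eM)).
    by apply/imsetP; exists (exist _ e eM).
have cardME : #|{: ME}| = k by rewrite card_sig -HK; apply: eq_card => x; rewrite !inE.
have trI : injective tr.
  move=> g g' E; apply/ffunP => e.
  have := trP g' (val e) (valP e) (sel e (g e)).
  have -> : exist _ (val e) (valP e) = e by apply: val_inj.
  have Hin : sel e (g e) \in tr g by apply/imsetP; exists e.
  rewrite -E inE selP Hin /= => /esym /eqP.
  exact: selI.
have -> : 2 ^ k = #|{: {ffun ME -> bool}}| by rewrite card_ffun card_bool cardME.
rewrite -(card_imset _ trI).
apply: subset_leq_card; apply/subsetP => X /imsetP[g _ ->].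
rewrite inE; apply/andP; split.
  rewrite card_imset ?cardME // => e e' E.
  apply: val_inj; apply: (Hd _ _ (sel e (g e))); try exact: valP.
  exact: selP. by rewrite E; exact: selP.
apply/eqP/setP => e; rewrite inE; case eM: (e \in M); rewrite ?andbF ?andbT //.
rewrite inE /is_edge (H2 _ eM) eqxx /=; apply/cards1P.
exists (sel (exist _ e eM) (g (exist _ e eM))); apply/setP => x.
by rewrite trP inE.
Qed.

Definition Mat n k : {set {set {set 'I_n}}} :=
  [set M : {set {set 'I_n}} | is_matching M && (#|M| == k)].

Lemma sum_cov n k : \sum_(M in Mat n k) #|cov k M| <= 'C(n, k) * n ^ k.
Proof.
have -> : \sum_(M in Mat n k) #|cov k M| =
          \sum_(M in Mat n k) \sum_(X : {set 'I_n}) (X \in cov k M : nat).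
  apply: eq_bigr => M _; rewrite -sum1_card big_mkcond /=.
  by apply: eq_bigr => X _; case: (X \in cov k M).
rewrite exchange_big /=.
have -> : 'C(n, k) * n ^ k = \sum_(X : {set 'I_n}) (if #|X| == k then n ^ k else 0).
  rewrite -big_mkcond /= sum_nat_const -[n in 'C(n, _)]card_ord -card_draws.
  by congr (_ * _); apply: eq_card => X; rewrite inE.
apply: leq_sum => X _.
case: eqP => HX; last first.
  rewrite big1 // => M _; rewrite inE; case: eqP => //.
have -> : \sum_(M in Mat n k) (X \in cov k M : nat) =
          \sum_(M in Mat n k | X \in cov k M) 1.
  by rewrite [in RHS]big_mkcondr /=; apply: eq_bigr => M _; case: (X \in cov k M).
rewrite sum1_card -HX; apply: leq_trans (count_fix X).
apply: subset_leq_card; apply/subsetP => M; rewrite !inE.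
rewrite unfold_in !inE.
by case/andP=> /andP[-> _] /andP[_ ->].
Qed.
From mathcomp Require Import all_algebra.
From mathcomp Require Import Rstruct.
Import GRing.Theory Num.Theory.
Local Open Scope ring_scope.

Lemma sum_prod_bool (I : finType) (G : I -> bool -> R) :
  \sum_(f : {ffun I -> bool}) \prod_(x : I) G x (f x) =
  \prod_(x : I) (G x true + G x false).
Proof.
rewrite -(bigA_distr_bigA (fun x b => G x b)) /=.
by apply: eq_bigr => x _; rewrite big_bool.
Qed.

Lemma prod_ind (I : finType) (P : pred I) (f : {ffun I -> bool}) :
  ([forall x in P, ~~ f x] : nat)%:R = \prod_(x : I) (if x \in P then ((~~ f x) : nat)%:R else 1) :> R.
Proof.
case: forallP => /= H.
  rewrite big1 // => x _; case Px: (x \in P) => //.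
  by have := H x; rewrite Px /= => ->.
case: (pickP (fun x => (x \in P) && f x)) => [x /andP[Px fx] | N]; last first.
  by exfalso; apply: H => x; have := N x; case: (x \in P); case: (f x).
rewrite (bigD1 x) //= Px fx /= mul0r //.
Qed.

Lemma prod_ind1 (I : finType) (K : pred I) (y : I) (f : {ffun I -> bool}) :
  ((f y && K y) : nat)%:R = \prod_(x : I) (if x == y then ((f x && K x) : nat)%:R else 1) :> R.
Proof.
rewrite (bigD1 y) //= eqxx big1 ?mulr1 // => x /negbTE -> //.
Qed.

Lemma card_sumb (T : finType) (P : pred T) : #|[set x | P x]| = (\sum_x (P x : nat))%N.
Proof.
rewrite -sum1_card big_mkcond /=; apply: eq_bigr => x _; rewrite inE; by case: (P x).
Qed.

Lemma card_sumb2 (T : finType) (A : pred T) (P : pred T) :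
  #|[set x in A | P x]| = (\sum_(x in A) (P x : nat))%N.
Proof.
rewrite -sum1_card (eq_bigl (fun x => (x \in A) && P x)); last by move=> x; rewrite !inE.
rewrite big_mkcond [RHS]big_mkcond /=; apply: eq_bigr => x _.
by case: (x \in A); case: (P x).
Qed.

Lemma avg_exists (I J : finType) (K : pred I) (Jp : pred J) (A : J -> {set I}) (p : R) :
  0 <= p <= 1 -> (forall j x, x \in A j -> K x) ->
  exists f : {ffun I -> bool},
   ((#|[set x | f x && K x]| + #|[set j in Jp | [forall x in A j, ~~ f x]]|)%:R
     <= p * #|K|%:R + \sum_(j in Jp) (1 - p) ^+ #|A j|).
Proof.
move=> /andP[p0 p1] AK.
pose G x (b : bool) := if K x then (if b then p else 1 - p) else (if b then 0 else 1).
pose w (f : {ffun I -> bool}) := \prod_x G x (f x).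
pose v (f : {ffun I -> bool}) := (#|[set x | f x && K x]| + #|[set j in Jp | [forall x in A j, ~~ f x]]|)%N.
have G1 x : G x true + G x false = 1.
  rewrite /G; case: (K x); rewrite ?add0r //; by rewrite addrC subrK.
have w0 f : 0 <= w f.
  apply: prodr_ge0 => x _; rewrite /G; case: (K x); case: (f x) => //; by rewrite subr_ge0.
have w1 : \sum_f w f = 1.
  by rewrite /w sum_prod_bool big1 // => x _; exact: G1.
have avg : \sum_f w f * (v f)%:R = p * #|K|%:R + \sum_(j in Jp) (1 - p) ^+ #|A j|.
  rewrite /v.
  under eq_bigr => f _ do rewrite card_sumb card_sumb2 natrD !natr_sum mulrDr !mulr_sumr.
  rewrite big_split /= exchange_big /= [X in _ + X]exchange_big /=.
  congr (_ + _).
  - have -> : p * #|K|%:R = \sum_y (if K y then p else 0).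
      by rewrite -big_mkcond /= sumr_const mulr_natr.
    apply: eq_bigr => y _.
    under eq_bigr => f _ do rewrite prod_ind1 /w -big_split /=.
    rewrite (sum_prod_bool (fun x b => G x b * (if x == y then ((b && K x) : nat)%:R else 1))).
    rewrite (bigD1 y) //= eqxx big1 ?mulr1.
      by rewrite /G; case: (K y) => /=; rewrite ?mulr1 ?mulr0 ?addr0.
    by move=> x /negbTE ->; rewrite !mulr1 G1.
  - apply: eq_bigr => j _.
    under eq_bigr => f _ do rewrite prod_ind /w -big_split /=.
    rewrite (sum_prod_bool (fun x b => G x b * (if x \in A j then ((~~ b) : nat)%:R else 1))).
    rewrite -prodr_const [RHS]big_mkcond /=; apply: eq_bigr => x _.
    case xA: (x \in A j); rewrite ?mulr1 ?G1 //.
    by rewrite /G (AK _ _ xA) /= mulr0 add0r.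
pose f0 := [arg min_(f < [ffun => false]) v f].
exists f0; rewrite -/(v f0) -avg.
have -> : (v f0)%:R = \sum_f w f * (v f0)%:R :> R by rewrite -mulr_suml w1 mul1r.
apply: ler_sum => f _; apply: ler_wpM2l => //; rewrite ler_nat.
rewrite /f0; case: arg_minnP => // g _; exact.
Qed.

From mathcomp Require Import all_order.
Import Order.TTheory GRing.Theory Num.Theory.
Lemma core (n k : nat) (p : R) : (0 < n)%N -> (0 <= p <= 1) ->
  exists T : {set {set 'I_n}},
    [forall X in T, #|X| == k] /\
    (#|T|%:R <= p * 'C(n, k)%:R + #|Mat n k|%:R * (1 - p) ^+ (2 ^ k)) /\
    (forall M : {set {set 'I_n}}, is_matching M -> #|M| = k ->
       exists2 X, X \in T & delta X :&: M = M).
Proof.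
move=> n0 p01; have d : 'I_n := Ordinal n0.
have AK : forall (M : {set {set 'I_n}}) X, X \in cov k M -> (fun X : {set 'I_n} => #|X| == k) X.
  by move=> M X; rewrite inE => /andP[].
have [f Hf] := @avg_exists _ _ (fun X : {set 'I_n} => #|X| == k) [pred M | M \in Mat n k] (@cov n k) p p01 AK.
pose g (M : {set {set 'I_n}}) := odflt set0 [pick X in cov k M].
have gP M : M \in Mat n k -> g M \in cov k M.
  rewrite inE => /andP[mM /eqP kM].
  rewrite /g; case: pickP => [X //|N].
  have := count_trans d mM kM.
  have -> : #|cov k M| = 0%N by apply/eqP; rewrite cards_eq0; apply/eqP/setP => X; rewrite N inE.
  by rewrite leqn0 expn_eq0.
pose S := [set X | f X && (#|X| == k)].
pose U := [set M in [pred M | M \in Mat n k] | [forall X in cov k M, ~~ f X]].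
exists (S :|: [set g M | M in U]); split; [|split].
- apply/forall_inP => X; rewrite inE => /orP[|/imsetP[M MU ->]].
    by rewrite inE => /andP[].
  by move: MU; rewrite inE => /andP[/gP]; rewrite inE => /andP[].
- apply: le_trans _ (_ : _ <= p * 'C(n, k)%:R + #|Mat n k|%:R * (1 - p) ^+ (2 ^ k)).
  + apply: le_trans _ Hf.
    rewrite ler_nat; apply: leq_trans (leq_card_setU _ _).1 _.
    by rewrite leq_add2l leq_imset_card.
  + have -> : #|(fun X : {set 'I_n} => #|X| == k)| = 'C(n, k).
      by rewrite -[n in 'C(n, _)]card_ord -card_draws; apply: eq_card => X; rewrite inE.
    rewrite lerD2l.
    have -> : #|Mat n k|%:R * (1 - p) ^+ (2 ^ k) = \sum_(M in [pred M in Mat n k]) (1 - p) ^+ (2 ^ k).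
      by rewrite sumr_const mulr_natl; congr (_ *+ _); apply: eq_card.
    apply: ler_sum => M; rewrite inE => /andP[mM /eqP kM].
    case/andP: p01 => p0 p1.
    apply: ler_wiXn2l; [by rewrite subr_ge0 | by rewrite lerBlDr lerDl | ]. exact: (count_trans d mM kM).
- move=> M mM kM.
  have MM : M \in Mat n k by rewrite inE mM kM eqxx.
  case fa : [forall X in cov k M, ~~ f X].
  + exists (g M).
      by rewrite inE; apply/orP; right; apply/imsetP; exists M => //; rewrite inE MM fa.
    by have := gP M MM; rewrite inE => /andP[_ /eqP].
  + move/negbT: fa => /forall_inPn [X Xc /negPn fX].
    exists X; first by rewrite !inE fX; move: Xc; rewrite inE => /andP[->].
    by move: Xc; rewrite inE => /andP[_ /eqP].
Qed.

Delimit Scope R_scope with R.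
Lemma INR_expn (a k : nat) : INR (a ^ k)%N = (INR a ^ k)%R.
Proof.
elim: k => [|k IH]; first by rewrite expn0.
by rewrite expnS mulnE mult_INR IH.
Qed.

Lemma mat_bound n k : (0 < n)%N -> (#|Mat n k| * 2 ^ k <= 'C(n, k) * n ^ k)%N.
Proof.
move=> n0; have d : 'I_n := Ordinal n0.
apply: (leq_trans _ (sum_cov n k)).
rewrite -sum_nat_const; apply: leq_sum => M; rewrite inE => /andP[mM /eqP kM].
by have := count_trans d mM kM.
Qed.


Theorem corollary1 (n k : nat) :
  (2 <= n)%N -> (1 <= k)%N -> (k <= n %/ 2)%N ->
  exists T : {set {set 'I_n}},
    [forall X in T, #|X| == k] /\
    (INR #|T| <= (1 + INR k * ln (INR n)) * (/ 2) ^ k * INR 'C(n, k))%R /\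
    (forall M : {set {set 'I_n}}, is_matching M -> #|M| = k ->
       exists2 X, X \in T & delta X :&: M = M).
Proof.
move=> n2 k1 kn.
have n0 : (0 < n)%N by apply: leq_trans n2.
have Hn : (1 < INR n)%R by apply: (lt_INR 1); apply/ssrnat.ltP.
have HL : (0 <= INR k * ln (INR n))%R.
  apply: Rmult_le_pos; first exact: pos_INR.
  rewrite -ln_1; apply: Rlt_le; apply: ln_increasing; lra.
have Hm : (1 <= 2 ^ k)%coq_nat by apply/ssrnat.leP; rewrite expn_gt0.
have [p0 p1] := pchoice_range _ _ HL Hm.
have p01 : 0 <= pchoice (INR k * ln (INR n)) (2 ^ k) <= 1.
  by apply/andP; split; apply/RleP.
have [T [HT1 [HT2 HT3]]] := core k n0 p01.
exists T; split => //; split => //.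
have E2 : ((/ 2) ^ k = / INR (2 ^ k)%N)%R.
  rewrite pow_inv INR_expn; congr (/ (_ ^ _))%R; simpl; lra.
rewrite E2.
apply: (@final_ineq _ (INR #|Mat n k|)) => //.
- exact: pos_INR.
- exact: pos_INR.
- rewrite -ln_pow; last lra.
  rewrite exp_ln; last by apply: pow_lt; lra.
  rewrite -!INR_expn -!mult_INR; apply: le_INR; apply/ssrnat.leP; rewrite -!mulnE; exact: mat_bound.
- move/RleP: HT2; rewrite -!INRE -RpowE; exact.
Qed.
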